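(* Let $f:\mathbb{R}^n\to\mathbb{R}$, $c:\mathbb{R}^n\to\mathbb{R}^m$, and consider Algorithm 1 (described in the context) under the Standing Assumption of the context. Then for every $k\in\mathbb{N}$ the inner loop over $j$ terminates finitely. Moreover, for all $k\in\mathbb{N}$, $$L_k\le L_{\max}:=\max\{L_{-1},\rho L\}\quad\text{and}\quad\gamma_{k,i}\le\gamma_{\max,i}:=\max\{\gamma_{-1,i},\rho\gamma_i\}\ \text{ for all } i\in\{1,\dots,m\}.$$
   Context: Notation: $g_k=\nabla f(x_k)$, $c_k=c(x_k)$, $J_k=\nabla c(x_k)^T$; $\phi(x,\tau)=\tau f(x)+\|c(x)\|_1$; $\Delta q(x,\tau,g,H,d)=-\tau(g^Td+\frac12\max\{d^THd,0\})+\|c(x)\|_1$. $\{H_k\}$ are symmetric with $\|H_k\|_2\le\kappa_H$ and $u^TH_ku\ge\zeta\|u\|_2^2$ whenever $J_ku=0$. Algorithm 1 (inputs $x_0$, $\tau_{-1}>0$, $\epsilon,\sigma,\eta\in(0,1)$, $\rho>1$, $L_{-1}>0$, $\gamma_{-1,i}>0$): at iteration $k$, $(d_k,y_k)$ solves $H_kd_k+J_k^Ty_k=-g_k$, $J_kd_k=-c_k$; stop if $g_k+J_k^Ty_k=0$ and $c_k=0$. Set $\tau_k^{trial}=\infty$ if $g_k^Td_k+\max\{d_k^TH_kd_k,0\}\le0$, else $\frac{(1-\sigma)\|c_k\|_1}{g_k^Td_k+\max\{d_k^TH_kd_k,0\}}$; $\tau_k=\tau_{k-1}$ if $\tau_{k-1}\le\tau_k^{trial}$,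 else $(1-\epsilon)\tau_k^{trial}$. Choose $L_{k,0}\in(0,L_{k-1}]$ and $\gamma_{k,i,0}\in(0,\gamma_{k-1,i}]$. For $j=0,1,\dots$: with $\Lambda_{k,j}=\tau_kL_{k,j}+\sum_i\gamma_{k,i,j}$, $\widehat\alpha_{k,j}=\frac{2(1-\eta)\Delta q(x_k,\tau_k,g_k,H_k,d_k)}{\Lambda_{k,j}\|d_k\|_2^2}$, $\widetilde\alpha_{k,j}=\widehat\alpha_{k,j}-\frac{4\|c_k\|_1}{\Lambda_{k,j}\|d_k\|_2^2}$; $\alpha_{k,j}=\widehat\alpha_{k,j}$ if $\widehat\alpha_{k,j}<1$, $1$ if $\widetilde\alpha_{k,j}\le1\le\widehat\alpha_{k,j}$, $\widetilde\alpha_{k,j}$ if $\widetilde\alpha_{k,j}>1$. Let (SD) be $\phi(x_k+\alpha_{k,j}d_k,\tau_k)\le\phi(x_k,\tau_k)-\eta\alpha_{k,j}\Delta q(x_k,\tau_k,g_k,H_k,d_k)$, (LF) be $f(x_k+\alpha_{k,j}d_k)\le f(x_k)+\alpha_{k,j}g_k^Td_k+\frac12L_{k,j}\alpha_{k,j}^2\|d_k\|_2^2$, (LC$_i$) be $|c_i(x_k+\alpha_{k,j}d_k)|\le|c_i(x_k)+\alpha_{k,j}\nabla c_i(x_k)^Td_k|+\frac12\gamma_{k,i,j}\alpha_{k,j}^2\|d_k\|_2^2$. If (SD) holds, or (LF) and all (LC$_i$) hold: set $L_k=L_{k,j}$, $\gamma_{k,i}=\gamma_{k,i,j}$, $\alpha_k=\alpha_{k,j}$,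 $x_{k+1}=x_k+\alpha_kd_k$ and end the inner loop. Otherwise $L_{k,j+1}=\rho L_{k,j}$ if (LF) fails (else $L_{k,j}$), and $\gamma_{k,i,j+1}=\rho\gamma_{k,i,j}$ if (LC$_i$) fails (else $\gamma_{k,i,j}$). Standing Assumption: there is an open convex set $\mathcal X$ containing all iterates and all trial points $x_k+\alpha_{k,j}d_k$; $f$ is $C^1$ and bounded below on $\mathcal X$, $\nabla f$ is bounded and Lipschitz with constant $L$ on $\mathcal X$; $c$ and $\nabla c^T$ are bounded on $\mathcal X$; each $\nabla c_i$ is Lipschitz with constant $\gamma_i$ on $\mathcal X$; singular values of $\nabla c(x)^T$ bounded away from zero uniformly over $\mathcal X$. *)

(* Defs.v *)
From HB Require Import structures.
From mathcomp Require Import all_boot all_order all_algebra.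
From mathcomp Require Import all_classical all_reals all_analysis.
Set Implicit Arguments. Unset Strict Implicit. Unset Printing Implicit Defensive.
Import Order.TTheory GRing.Theory Num.Theory.
Import numFieldNormedType.Exports.
Local Open Scope classical_set_scope.
Local Open Scope ring_scope.

Section Defs.
Variable R : realType.

Definition dot (p : nat) (u v : 'cV[R]_p) : R := (u^T *m v) 0 0.
Definition norm1 (p : nat) (v : 'cV[R]_p) : R := \sum_(i < p) `|v i 0|.
Definition sqnorm2 (p : nat) (v : 'cV[R]_p) : R := \sum_(i < p) (v i 0) ^+ 2.
Definition norm2 (p : nat) (v : 'cV[R]_p) : R := Num.sqrt (sqnorm2 v).

Variables n m : nat.

Definition gradc (J : 'cV[R]_n -> 'M[R]_(m, n)) (i : 'I_m) (x : 'cV[R]_n)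
  : 'cV[R]_n := (row i (J x))^T.

Definition convex_set (X : set 'cV[R]_n) : Prop :=
  forall a b, X a -> X b -> forall t : R, 0 <= t <= 1 ->
    X ((1 - t) *: a + t *: b).

Definition lipschitz_on (X : set 'cV[R]_n) (G : 'cV[R]_n -> 'cV[R]_n) (K : R) :=
  forall a b, X a -> X b -> norm2 (G a - G b) <= K * norm2 (a - b).

Definition standing_assumption (f : 'cV[R]_n -> R) (g : 'cV[R]_n -> 'cV[R]_n)
  (c : 'cV[R]_n -> 'cV[R]_m) (J : 'cV[R]_n -> 'M[R]_(m, n))
  (X : set 'cV[R]_n) (L : R) (gam : 'I_m -> R) : Prop :=
  [/\ open X, convex_set X,
   (* f is differentiable on X with gradient g (C^1 follows from Lipschitz g) *)
   (forall x, X x -> differentiable f x /\ forall v, 'd f x v = dot (g x) v) &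
   (forall i x, X x -> differentiable (fun z => c z i 0) x /\
                       forall v, 'd (fun z => c z i 0) x v = (J x *m v) i 0)] /\
  [/\
   (exists B, forall x, X x -> B <= f x),
   (exists B, forall x, X x -> norm2 (g x) <= B) &
   lipschitz_on X g L] /\
  [/\
   (exists B, forall x, X x -> norm2 (c x) <= B),
   (exists B, forall x v, X x -> norm2 (J x *m v) <= B * norm2 v),
   (forall i, lipschitz_on X (gradc J i) (gam i)) &
   (* singular values of nabla c(x)^T bounded away from zero uniformly *)
   (exists s, 0 < s /\ forall x (u : 'cV[R]_m), X x ->
            s * norm2 u <= norm2 ((J x)^T *m u))].

Definition phi (f : 'cV[R]_n -> R) (c : 'cV[R]_n -> 'cV[R]_m) x (tau : R) : R :=
  tau * f x + norm1 (c x).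

Definition Dq (c : 'cV[R]_n -> 'cV[R]_m) x (tau : R) (g : 'cV[R]_n)
  (H : 'M[R]_n) (d : 'cV[R]_n) : R :=
  - tau * (dot g d + 2^-1 * Num.max (dot d (H *m d)) 0) + norm1 (c x).

(* merit parameter update: tau_k from tau_{k-1} (tau_trial = +oo encoded
   by the first branch) *)
Definition tau_update (sigma eps taup : R) (gk : 'cV[R]_n) (ck : 'cV[R]_m)
  (Hk : 'M[R]_n) (dk : 'cV[R]_n) : R :=
  let den := dot gk dk + Num.max (dot dk (Hk *m dk)) 0 in
  if den <= 0 then taup
  else let trial := (1 - sigma) * norm1 ck / den in
       if taup <= trial then taup else (1 - eps) * trial.

Definition alpha_step (eta tau Lkj : R) (gkj : 'I_m -> R) (dq : R)
  (ck : 'cV[R]_m) (dk : 'cV[R]_n) : R :=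
  let Lam := tau * Lkj + \sum_(i < m) gkj i in
  let ahat := 2 * (1 - eta) * dq / (Lam * sqnorm2 dk) in
  let atil := ahat - 4 * norm1 ck / (Lam * sqnorm2 dk) in
  if ahat < 1 then ahat else if atil <= 1 then 1 else atil.

Definition test_SD f c x tau g H d (eta alpha : R) : Prop :=
  phi f c (x + alpha *: d) tau <= phi f c x tau - eta * alpha * Dq c x tau g H d.

Definition test_LF (f : 'cV[R]_n -> R) x g d (Lkj alpha : R) : Prop :=
  f (x + alpha *: d) <= f x + alpha * dot g d + 2^-1 * Lkj * alpha ^+ 2 * sqnorm2 d.

Definition test_LC (c : 'cV[R]_n -> 'cV[R]_m) (J : 'cV[R]_n -> 'M[R]_(m, n))
  x d (i : 'I_m) (gkji alpha : R) : Prop :=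
  `|c (x + alpha *: d) i 0| <= `|c x i 0 + alpha * (J x *m d) i 0|
                                + 2^-1 * gkji * alpha ^+ 2 * sqnorm2 d.

Section Run.
Variables (f : 'cV[R]_n -> R) (g : 'cV[R]_n -> 'cV[R]_n)
  (c : 'cV[R]_n -> 'cV[R]_m) (J : 'cV[R]_n -> 'M[R]_(m, n)).
Variables (taum1 eps sigma eta rho Lm1 : R) (gm1 : 'I_m -> R).
Variables (x : nat -> 'cV[R]_n) (H : nat -> 'M[R]_n)
  (d : nat -> 'cV[R]_n) (y : nat -> 'cV[R]_m) (tau : nat -> R)
  (Lkj : nat -> nat -> R) (gkj : nat -> nat -> 'I_m -> R)
  (Lk : nat -> R) (gk : nat -> 'I_m -> R).

Definition stop_test (k : nat) : Prop :=
  g (x k) + (J (x k))^T *m y k = 0 /\ c (x k) = 0.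

Definition reached (k : nat) : Prop := forall k', (k' < k)%N -> ~ stop_test k'.
Definition active (k : nat) : Prop := reached k /\ ~ stop_test k.

Definition tau_prev (k : nat) : R := if k is k'.+1 then tau k' else taum1.
Definition L_prev (k : nat) : R := if k is k'.+1 then Lk k' else Lm1.
Definition gam_prev (k : nat) (i : 'I_m) : R :=
  if k is k'.+1 then gk k' i else gm1 i.

Definition alpha_kj (k j : nat) : R :=
  alpha_step eta (tau k) (Lkj k j) (gkj k j)
    (Dq c (x k) (tau k) (g (x k)) (H k) (d k)) (c (x k)) (d k).

Definition LF_kj (k j : nat) : Prop :=
  test_LF f (x k) (g (x k)) (d k) (Lkj k j) (alpha_kj k j).
Definition LC_kj (k j : nat) (i : 'I_m) : Prop :=
  test_LC c J (x k) (d k) i (gkj k j i) (alpha_kj k j).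
Definition accept (k j : nat) : Prop :=
  test_SD f c (x k) (tau k) (g (x k)) (H k) (d k) eta (alpha_kj k j)
  \/ (LF_kj k j /\ forall i, LC_kj k j i).

Definition algorithm1_run : Prop :=
  forall k, reached k ->
  [/\ H k *m d k + (J (x k))^T *m y k = - g (x k),
      J (x k) *m d k = - c (x k) &
      ~ stop_test k ->
      [/\ tau k = tau_update sigma eps (tau_prev k) (g (x k)) (c (x k)) (H k) (d k),
          0 < Lkj k 0 <= L_prev k,
          (forall i, 0 < gkj k 0 i <= gam_prev k i),
          (forall j, ~ accept k j ->
             Lkj k j.+1 = (if `[< LF_kj k j >] then Lkj k j else rho * Lkj k j)
             /\ forall i, gkj k j.+1 i =
                  (if `[< LC_kj k j i >] then gkj k j i else rho * gkj k j i)) &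
          (forall j, accept k j -> (forall j', (j' < j)%N -> ~ accept k j') ->
             [/\ Lk k = Lkj k j, (forall i, gk k i = gkj k j i) &
                 x k.+1 = x k + alpha_kj k j *: d k])]].

(* Standing Assumption, part on the run: iterates and trial points lie in X *)
Definition run_in (X : set 'cV[R]_n) : Prop :=
  (forall k, reached k -> X (x k)) /\
  (forall k j, active k -> (forall j', (j' < j)%N -> ~ accept k j') ->
     X (x k + alpha_kj k j *: d k)).

Definition hessians_ok (kappaH zeta : R) : Prop :=
  forall k, reached k ->
  [/\ (H k)^T = H k,
      (forall v, norm2 (H k *m v) <= kappaH * norm2 v) &
      (forall u, J (x k) *m u = 0 -> zeta * sqnorm2 u <= dot u (H k *m u))].
End Run.

End Defs.

(* Main.v *)
Require Import Defs.
From HB Require Import structures.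
From mathcomp Require Import all_boot all_order all_algebra.
From mathcomp Require Import all_classical all_reals all_analysis.
From mathcomp Require Import ring lra.
Import Order.TTheory GRing.Theory Num.Theory.
Import numFieldNormedType.Exports.
Local Open Scope classical_set_scope.
Local Open Scope ring_scope.

Section S.
Variable R : realType.
Variable n : nat.

Lemma line_is_derive (F : 'cV[R]_n -> R) (x v : 'cV[R]_n) (t : R) :
  differentiable F (x + t *: v) ->
  is_derive t 1 (fun s => F (x + s *: v)) ('d F (x + t *: v) v).
Proof.
move=> DF.
have E : (fun h : R => h^-1 *: (((fun s => F (x + s *: v)) \o shift t) (h *: 1) - F (x + t *: v)))
  = (fun h : R => h^-1 *: ((F \o shift (x + t *: v)) (h *: v) - F (x + t *: v))).
  apply/funext => h /=; rewrite /shift /=.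
  by congr (_ *: (F _ - _)); rewrite -[h%:A]/(h * 1) mulr1 scalerDl addrCA addrA.
apply: DeriveDef.
  rewrite /derivable E. exact: (@diff_derivable _ _ _ F (x + t *: v) v DF).
by rewrite /derive E -/(derive F (x + t *: v) v) deriveE.
Qed.

Lemma dotE (u v : 'cV[R]_n) : dot u v = \sum_(i < n) u i 0 * v i 0.
Proof. by rewrite /dot !mxE; apply: eq_bigr => i _; rewrite !mxE. Qed.

Lemma dotBl (a b v : 'cV[R]_n) : dot (a - b) v = dot a v - dot b v.
Proof. by rewrite !dotE -sumrB; apply: eq_bigr => i _; rewrite !mxE mulrBl. Qed.

Lemma dotNl (a v : 'cV[R]_n) : dot (- a) v = - dot a v.
Proof. by rewrite !dotE -sumrN; apply: eq_bigr => i _; rewrite !mxE mulNr. Qed.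

Lemma dotZr (a v : 'cV[R]_n) t : dot a (t *: v) = t * dot a v.
Proof. by rewrite !dotE mulr_sumr; apply: eq_bigr => i _; rewrite !mxE mulrCA. Qed.

Lemma sqnorm2_ge0 (v : 'cV[R]_n) : 0 <= sqnorm2 v.
Proof. by apply: sumr_ge0 => i _; rewrite sqr_ge0. Qed.

Lemma sqnorm2Z (v : 'cV[R]_n) t : sqnorm2 (t *: v) = t ^+ 2 * sqnorm2 v.
Proof. by rewrite /sqnorm2 mulr_sumr; apply: eq_bigr => i _; rewrite !mxE exprMn. Qed.

Lemma norm2_sqr (v : 'cV[R]_n) : norm2 v ^+ 2 = sqnorm2 v.
Proof. by rewrite /norm2 sqr_sqrtr // sqnorm2_ge0. Qed.

Lemma norm2_ge0 (v : 'cV[R]_n) : 0 <= norm2 v.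
Proof. exact: sqrtr_ge0. Qed.

Lemma norm2Z (v : 'cV[R]_n) t : norm2 (t *: v) = `|t| * norm2 v.
Proof. by rewrite /norm2 sqnorm2Z sqrtrM ?sqr_ge0 // sqrtr_sqr. Qed.

Lemma norm2_eq0 (v : 'cV[R]_n) : norm2 v = 0 -> forall i, v i 0 = 0.
Proof.
move=> /eqP; rewrite /norm2 sqrtr_eq0 => H i.
have H0 : sqnorm2 v = 0 by apply/eqP; rewrite eq_le H sqnorm2_ge0.
move: H0; rewrite /sqnorm2 => /psumr_eq0P => /(_ (fun j _ => sqr_ge0 (v j 0)) i isT).
by move/eqP; rewrite sqrf_eq0 => /eqP.
Qed.

Lemma CS (u v : 'cV[R]_n) : dot u v <= norm2 u * norm2 v.
Proof.
set A := norm2 u; set B := norm2 v.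
have A0 : 0 <= A by exact: norm2_ge0.
have B0 : 0 <= B by exact: norm2_ge0.
have [AB0|ABpos] := eqVneq (A * B) 0.
  have : (A == 0) || (B == 0) by rewrite -mulf_eq0 AB0.
  case/orP => /eqP/norm2_eq0 H; rewrite dotE big1 ?mulr_ge0 // => i _;
  by rewrite H ?mul0r ?mulr0.
have ABp : 0 < A * B by rewrite lt_def ABpos; apply: mulr_ge0.
have key : 2 * (A * B) * dot u v <= 2 * (A * B) ^+ 2.
  have -> : 2 * (A * B) ^+ 2 = \sum_(i < n) ((B * u i 0) ^+ 2 + (A * v i 0) ^+ 2).
    rewrite big_split /=.
    have -> : \sum_(i < n) (B * u i 0) ^+ 2 = B ^+ 2 * sqnorm2 u.
      by rewrite /sqnorm2 mulr_sumr; apply: eq_bigr => i _; rewrite exprMn.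
    have -> : \sum_(i < n) (A * v i 0) ^+ 2 = A ^+ 2 * sqnorm2 v.
      by rewrite /sqnorm2 mulr_sumr; apply: eq_bigr => i _; rewrite exprMn.
    rewrite -!norm2_sqr -/A -/B; ring.
  rewrite dotE mulr_sumr; apply: ler_sum => i _.
  rewrite -subr_ge0.
  have -> : (B * u i 0) ^+ 2 + (A * v i 0) ^+ 2 - 2 * (A * B) * (u i 0 * v i 0)
    = (B * u i 0 - A * v i 0) ^+ 2 by ring.
  exact: sqr_ge0.
have h2 : 0 < 2 * (A * B) by rewrite mulr_gt0.
by rewrite -(ler_pM2l h2); apply: (le_trans key); rewrite expr2 mulrA.
Qed.

Lemma CSabs (u v : 'cV[R]_n) : `|dot u v| <= norm2 u * norm2 v.
Proof.
rewrite ler_norml CS andbT lerNl -dotNl.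
apply: le_trans (CS _ _) _.
have -> : norm2 (- u) = norm2 u.
  by rewrite -scaleN1r norm2Z normrN normr1 mul1r.
by [].
Qed.

Lemma itv_oo_cc (t : R) : t \in `]0, 1[ -> 0 <= t <= 1.
Proof. by rewrite in_itv /= => /andP[a b]; rewrite !ltW. Qed.

Lemma descent_s (F : 'cV[R]_n -> R) (G : 'cV[R]_n -> 'cV[R]_n) (X : set 'cV[R]_n)
  (K s : R) (x v : 'cV[R]_n) :
  `|s| = 1 -> Defs.convex_set X ->
  (forall z, X z -> differentiable F z /\ forall w, 'd F z w = dot (G z) w) ->
  Defs.lipschitz_on X G K -> X x -> X (x + v) ->
  s * (F (x + v) - F x - dot (G x) v) <= 2^-1 * K * sqnorm2 v.
Proof.
move=> s1 cvx HF lip Xx Xxv.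
set D := dot (G x) v; set S := sqnorm2 v.
have Xt : forall t : R, 0 <= t <= 1 -> X (x + t *: v).
  move=> t t01; have := cvx x (x + v) Xx Xxv t t01.
  by rewrite scalerDr scalerBl scale1r addrA subrK.
pose h := fun t : R => F (x + t *: v).
pose k : R -> R := s \*: (h - D \*: (@id R)) - (2^-1 * K * S) \*: ((@id R) ^+ 2).
pose dk := fun t : R => s * (dot (G (x + t *: v)) v - D) - K * S * t.
have dkP : forall t : R, 0 <= t <= 1 -> is_derive t 1 k (dk t).
  move=> t t01; have [Dz dz] := HF _ (Xt t t01).
  have hd := (@line_is_derive F x v t Dz); rewrite dz in hd.
  apply: is_derive_eq.
  change (s * (dot (G (x + t *: v)) v - D * 1) - (2^-1 * K * S) * (2 * t ^+ 1 * 1) = dk t).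
  by rewrite /dk expr1; field.
have cont : {within `[0, 1], continuous k}.
  apply: derivable_within_continuous => t; rewrite in_itv /= => t01.
  by case: (dkP t t01).
have [c c01 E] := @MVT_segment R k dk 0 1 ler01
  (fun t tin => dkP t (itv_oo_cc t tin)) cont.
have Ek : k 1 - k 0 = s * (F (x + v) - F x - D) - 2^-1 * K * S.
  rewrite /k /h.
  change (s * (F (x + 1 *: v) - D * 1) - (2^-1 * K * S) * (1 * 1)
    - (s * (F (x + 0 *: v) - D * 0) - (2^-1 * K * S) * (0 * 0)) = s * (F (x + v) - F x - D) - 2^-1 * K * S).
  rewrite scale1r scale0r addr0; ring.
have c01' : 0 <= c <= 1 by rewrite in_itv /= in c01.
have Xc := Xt c c01'.
have c0 : 0 <= c by case/andP: c01'.
have L1 : s * (dot (G (x + c *: v)) v - D) <= K * S * c.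
  rewrite /D -dotBl.
  apply: le_trans (ler_norm _) _.
  rewrite normrM s1 mul1r.
  apply: le_trans (CSabs _ _) _.
  have := lip _ _ Xc Xx.
  rewrite [x + _]addrC addrK norm2Z ger0_norm // => Hl.
  apply: le_trans (ler_wpM2r (norm2_ge0 v) Hl) _.
  rewrite /S -norm2_sqr le_eqVlt; apply/orP; left; apply/eqP; ring.
have dk0 : dk c <= 0 by rewrite /dk subr_le0.
move: E; rewrite Ek subr0 mulr1 => E.
by rewrite -subr_le0 E.
Qed.

Lemma descent_abs (F : 'cV[R]_n -> R) (G : 'cV[R]_n -> 'cV[R]_n) (X : set 'cV[R]_n)
  (K : R) (x v : 'cV[R]_n) :
  Defs.convex_set X ->
  (forall z, X z -> differentiable F z /\ forall w, 'd F z w = dot (G z) w) ->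
  Defs.lipschitz_on X G K -> X x -> X (x + v) ->
  `|F (x + v) - F x - dot (G x) v| <= 2^-1 * K * sqnorm2 v.
Proof.
move=> cvx HF lip Xx Xxv; rewrite ler_norml; apply/andP; split.
  have := @descent_s F G X K (-1) x v; rewrite normrN normr1 mulN1r lerNl.
  by apply.
have := @descent_s F G X K 1 x v; rewrite normr1 mul1r.
by apply.
Qed.

Lemma LF_ok (F : 'cV[R]_n -> R) (G : 'cV[R]_n -> 'cV[R]_n) (X : set 'cV[R]_n)
  (K Lc alpha : R) (x d : 'cV[R]_n) :
  Defs.convex_set X ->
  (forall z, X z -> differentiable F z /\ forall w, 'd F z w = dot (G z) w) ->
  Defs.lipschitz_on X G K -> X x -> X (x + alpha *: d) -> K <= Lc ->
  test_LF F x (G x) d Lc alpha.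
Proof.
move=> cvx HF lip Xx Xxv KL.
have := @descent_abs F G X K x (alpha *: d) cvx HF lip Xx Xxv.
rewrite ler_norml => /andP[_ H].
rewrite /test_LF.
have H2 : 2^-1 * K * sqnorm2 (alpha *: d) <= 2^-1 * Lc * alpha ^+ 2 * sqnorm2 d.
  rewrite sqnorm2Z mulrA ler_wpM2r ?sqnorm2_ge0 // ler_wpM2r ?sqr_ge0 //.
  by rewrite ler_wpM2l // invr_ge0 ler0n.
move: (le_trans H H2); rewrite dotZr; lra.
Qed.

Lemma dot_gradc (m : nat) (J : 'cV[R]_n -> 'M[R]_(m, n)) (i : 'I_m) z w :
  dot (gradc J i z) w = (J z *m w) i 0.
Proof. by rewrite /dot /gradc trmxK -row_mul mxE. Qed.

Lemma LC_ok (m : nat) (c : 'cV[R]_n -> 'cV[R]_m) (J : 'cV[R]_n -> 'M[R]_(m, n))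
  (X : set 'cV[R]_n) (i : 'I_m) (K gc alpha : R) (x d : 'cV[R]_n) :
  Defs.convex_set X ->
  (forall z, X z -> differentiable (fun z => c z i 0) z /\
                    forall w, 'd (fun z => c z i 0) z w = (J z *m w) i 0) ->
  Defs.lipschitz_on X (gradc J i) K -> X x -> X (x + alpha *: d) -> K <= gc ->
  test_LC c J x d i gc alpha.
Proof.
move=> cvx HF lip Xx Xxv KL.
have HF' : forall z, X z -> differentiable (fun z => c z i 0) z /\
    forall w, 'd (fun z => c z i 0) z w = dot (gradc J i z) w.
  by move=> z Xz; have [D1 D2] := HF z Xz; split => // w; rewrite D2 dot_gradc.
have := @descent_abs (fun z => c z i 0) (gradc J i) X K x (alpha *: d) cvx HF' lip Xx Xxv.
rewrite dot_gradc /= => H.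
have H2 : 2^-1 * K * sqnorm2 (alpha *: d) <= 2^-1 * gc * alpha ^+ 2 * sqnorm2 d.
  rewrite sqnorm2Z mulrA ler_wpM2r ?sqnorm2_ge0 // ler_wpM2r ?sqr_ge0 //.
  by rewrite ler_wpM2l // invr_ge0 ler0n.
have H3 := le_trans H H2.
rewrite /test_LC.
have -> : c (x + alpha *: d) i 0 = (c x i 0 + alpha * (J x *m d) i 0)
   + (c (x + alpha *: d) i 0 - c x i 0 - (J x *m (alpha *: d)) i 0).
  have -> : (J x *m (alpha *: d)) i 0 = alpha * (J x *m d) i 0.
    by rewrite -scalemxAr !mxE.
  ring.
apply: (le_trans (ler_normD _ _)).
by rewrite lerD2l.
Qed.
End S.

Section Inner.
Variable R : realType.

Lemma inner_bound (rho Lc : R) (Lj : nat -> R) (LF : nat -> Prop) (J : nat) :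
  1 <= rho -> 0 < Lj 0%N ->
  (forall j, (j < J)%N -> Lj j.+1 = if `[< LF j >] then Lj j else rho * Lj j) ->
  (forall j, (j < J)%N -> ~ LF j -> Lj j < Lc) ->
  forall j, (j <= J)%N -> Lj 0%N <= Lj j /\ Lj j <= Num.max (Lj 0%N) (rho * Lc).
Proof.
move=> r1 L0 upd fail; elim=> [_|j IH jJ].
  by split => //; rewrite le_max lexx.
have jJ' : (j < J)%N by [].
have [lo hi] := IH (ltnW jJ').
rewrite (upd _ jJ').
case: (asboolP (LF j)) => Hj; first by split.
have Lpos : 0 < Lj j by apply: lt_le_trans lo.
split.
  apply: (le_trans lo); rewrite ler_peMl //; exact: ltW.
rewrite le_max; apply/orP; right.
rewrite ler_pM2l ?(lt_le_trans ltr01 r1) //; apply: ltW; exact: fail.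
Qed.

Lemma bernoulli (rho : R) (j : nat) : 1 <= rho -> 1 + j%:R * (rho - 1) <= rho ^+ j.
Proof.
move=> r1; elim: j => [|j IH]; first by rewrite mul0r addr0 expr0.
rewrite exprS.
have H : rho * (1 + j%:R * (rho - 1)) <= rho * rho ^+ j.
  by rewrite ler_pM2l ?(lt_le_trans ltr01 r1).
apply: le_trans H; rewrite -subr_ge0 -natr1.
have -> : rho * (1 + j%:R * (rho - 1)) - (1 + (j%:R + 1) * (rho - 1)) = j%:R * (rho - 1) * (rho - 1) by ring.
by rewrite !mulr_ge0 // subr_ge0.
Qed.

Lemma inner_term (m : nat) (rho : R) (Lj : nat -> R) (gj : nat -> 'I_m -> R)
  (LF : nat -> Prop) (LC : nat -> 'I_m -> Prop) (Acc : nat -> Prop)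
  (BL : R) (Bg : 'I_m -> R) :
  1 < rho -> 0 < Lj 0%N -> (forall i, 0 < gj 0%N i) ->
  (forall j, (LF j /\ forall i, LC j i) -> Acc j) ->
  (forall j, ~ Acc j ->
     Lj j.+1 = (if `[< LF j >] then Lj j else rho * Lj j) /\
     forall i, gj j.+1 i = (if `[< LC j i >] then gj j i else rho * gj j i)) ->
  ((forall j, ~ Acc j) -> forall j, Lj j <= BL /\ forall i, gj j i <= Bg i) ->
  exists j, Acc j.
Proof.
move=> r1 L0 g0 AccI upd bnd.
apply: contrapT => Hno.
have Hn : forall j, ~ Acc j by move=> j Hj; apply: Hno; exists j.
have bnd' := bnd Hn.
have r0 : 0 < rho by apply: lt_trans r1.
have pos : forall j, 0 < Lj j /\ forall i, 0 < gj j i.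
  elim=> [|j [Lp gp]]; first by split.
  have [-> gu] := upd j (Hn j); split.
    by case: asboolP => _ //; rewrite mulr_gt0.
  by move=> i; rewrite gu; case: asboolP => _ //; rewrite mulr_gt0.
pose P j := Lj j * \prod_(i < m) gj j i.
have Pge : forall j, rho ^+ j * P 0%N <= P j.
  elim=> [|j IH]; first by rewrite expr0 mul1r.
  have [Lp gp] := pos j.
  have mono : forall i, gj j i <= gj j.+1 i.
    move=> i; have [_ gu] := upd j (Hn j); rewrite gu; case: asboolP => _ //.
    by rewrite ler_peMl // ltW.
  have monoL : Lj j <= Lj j.+1.
    have [Lu _] := upd j (Hn j); rewrite Lu; case: asboolP => _ //.
    by rewrite ler_peMl // ltW.
  suff : rho * P j <= P j.+1.
    move=> H; apply: le_trans H; rewrite exprS -mulrA ler_pM2l //.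
  have Pprod : forall jj, 0 <= \prod_(i < m) gj jj i.
    by move=> jj; apply: prodr_ge0 => i _; exact: ltW ((pos jj).2 i).
  rewrite /P; have [Lu gu] := upd j (Hn j).
  case: (asboolP (LF j)) => HLF; last first.
    rewrite Lu; case: asboolP => // _; rewrite -mulrA ler_pM2l // ler_pM2l //.
    by apply: ler_prod => i _; rewrite ltW ?mono.
  have [i0 Hi0] : exists i0, ~ LC j i0.
    apply: contrapT => H; apply: (Hn j); apply: AccI; split => // i.
    by apply: contrapT => Hi; apply: H; exists i.
  rewrite Lu; case: asboolP => // _.
  rewrite mulrCA; apply: ler_pM => //; first exact: ltW.
    by rewrite mulr_ge0 ?(ltW r0).
  rewrite (bigD1 i0) //= [X in _ <= X](bigD1 i0) //= mulrA.
  apply: ler_pM => //.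
  - by rewrite mulr_ge0 ?(ltW r0) ?(ltW (gp i0)).
  - by apply: prodr_ge0 => i _; exact: ltW.
  - by rewrite gu; case: asboolP.
  - by apply: ler_prod => i _; rewrite ltW ?mono.
have P0 : 0 < P 0%N.
  by rewrite /P mulr_gt0 // prodr_gt0 // => i _; exact: g0.
set B := BL * \prod_(i < m) Bg i.
have PB : forall j, P j <= B.
  move=> j; have [Lb gb] := bnd' j; have [Lp gp] := pos j.
  rewrite /P /B; apply: ler_pM => //.
  - exact: ltW.
  - by apply: prodr_ge0 => i _; exact: ltW.
  - by apply: ler_prod => i _; rewrite ltW ?gb.
set y := B / (P 0%N * (rho - 1)).
have rp : 0 < rho - 1 by rewrite subr_gt0.
set j := (Num.truncn y).+1.
have Hy : y < j%:R by exact: truncnS_gt.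
have := le_trans (Pge j) (PB j).
apply/negP; rewrite -ltNge.
have H1 : B < j%:R * (rho - 1) * P 0%N.
  have : y * (P 0%N * (rho - 1)) < j%:R * (P 0%N * (rho - 1)).
    by rewrite ltr_pM2r // mulr_gt0.
  have PR : 0 < P 0%N * (rho - 1) by rewrite mulr_gt0.
  rewrite /y divfK ?gt_eqF //.
  by move=> H; apply: (lt_le_trans H); rewrite le_eqVlt; apply/orP; left; apply/eqP; ring.
apply: (lt_le_trans H1); rewrite ler_pM2r //.
apply: (le_trans _ (bernoulli rho j (ltW r1))); by rewrite lerDr.
Qed.
End Inner.

Theorem lemma2p8 (R : realType) (n m : nat)
  (f : 'cV[R]_n -> R) (g : 'cV[R]_n -> 'cV[R]_n)
  (c : 'cV[R]_n -> 'cV[R]_m) (J : 'cV[R]_n -> 'M[R]_(m, n))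
  (X : set 'cV[R]_n) (L : R) (gam : 'I_m -> R) (kappaH zeta : R)
  (taum1 eps sigma eta rho Lm1 : R) (gm1 : 'I_m -> R)
  (x : nat -> 'cV[R]_n) (H : nat -> 'M[R]_n)
  (d : nat -> 'cV[R]_n) (y : nat -> 'cV[R]_m) (tau : nat -> R)
  (Lkj : nat -> nat -> R) (gkj : nat -> nat -> 'I_m -> R)
  (Lk : nat -> R) (gk : nat -> 'I_m -> R) :
  0 < taum1 -> 0 < eps < 1 -> 0 < sigma < 1 -> 0 < eta < 1 -> 1 < rho ->
  0 < Lm1 -> (forall i, 0 < gm1 i) -> 0 < zeta ->
  standing_assumption f g c J X L gam ->
  algorithm1_run f g c J taum1 eps sigma eta rho Lm1 gm1 x H d y tau Lkj gkj Lk gk ->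
  run_in f g c J eta x H d y tau Lkj gkj X ->
  hessians_ok g c J x H y kappaH zeta ->
  forall k, active g c J x y k ->
    (exists j, accept f g c J eta x H d tau Lkj gkj k j) /\
    Lk k <= Num.max Lm1 (rho * L) /\
    (forall i, gk k i <= Num.max (gm1 i) (rho * gam i)).
Proof.
move=> _ _ _ _ rho1 Lm0 gm0 _ SA ALG RUN _.
case: SA => [[_ cvx Hf Hc] [[_ _ lipg] [_ _ lipc _]]].
case: RUN => [RX RT].
have rho1' : 1 <= rho by exact: ltW.
move=> k; elim/ltn_ind: k => k IH Hact.
have [Hreach Hnstop] := Hact.
have [_ _ Hk] := ALG k Hreach.
have [_ /andP[L0pos L0le] g0 upd sel] := Hk Hnstop.
have Xk := RX k Hreach.
have g0p : forall i, 0 < gkj k 0%N i by move=> i; case/andP: (g0 i).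
have prevb : L_prev Lm1 Lk k <= Num.max Lm1 (rho * L) /\
   forall i, gam_prev gm1 gk k i <= Num.max (gm1 i) (rho * gam i).
  case: k IH Hact Hreach Hnstop Hk upd sel L0pos L0le g0 Xk g0p => [|k'] IH Hact Hreach _ _ _ _ _ _ _ _ _.
    by split => [|i] /=; rewrite le_max lexx.
  have Hact' : active g c J x y k'.
    split; last by apply: Hreach.
    by move=> k'' Hk''; apply: Hreach; apply: ltn_trans Hk'' _.
  have [_ [HL Hg]] := IH k' (ltnSn k') Hact'.
  by split.
have LFfail : forall j, (forall j', (j' < j)%N -> ~ accept f g c J eta x H d tau Lkj gkj k j') ->
    ~ LF_kj f g c eta x H d tau Lkj gkj k j -> Lkj k j < L.
  move=> j nb HLF; have [//|hle] := ltP (Lkj k j) L.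
  exfalso; apply: HLF.
  have Xt := RT k j Hact nb.
  apply: (@LF_ok R n f g X L _ _ (x k) (d k) cvx _ lipg Xk Xt hle).
  by move=> z Xz; have [D1 D2] := Hf z Xz; split.
have LCfail : forall j i, (forall j', (j' < j)%N -> ~ accept f g c J eta x H d tau Lkj gkj k j') ->
    ~ LC_kj g c J eta x H d tau Lkj gkj k j i -> gkj k j i < gam i.
  move=> j i nb HLC; have [//|hle] := ltP (gkj k j i) (gam i).
  exfalso; apply: HLC.
  have Xt := RT k j Hact nb.
  apply: (@LC_ok R n m c J X i (gam i) _ _ (x k) (d k) cvx _ (lipc i) Xk Xt hle).
  by move=> z Xz; exact: Hc.
have bndL : forall J0, (forall j', (j' < J0)%N -> ~ accept f g c J eta x H d tau Lkj gkj k j') ->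
    forall j, (j <= J0)%N -> Lkj k 0%N <= Lkj k j /\ Lkj k j <= Num.max (Lkj k 0%N) (rho * L).
  move=> J0 nb; apply: (@inner_bound R rho L (Lkj k) (LF_kj f g c eta x H d tau Lkj gkj k) J0 rho1' L0pos).
  - by move=> j hj; exact: (upd j (nb j hj)).1.
  - move=> j hj; apply: LFfail => j' hj'; apply: nb; exact: ltn_trans hj' hj.
have bndg : forall J0 i, (forall j', (j' < J0)%N -> ~ accept f g c J eta x H d tau Lkj gkj k j') ->
    forall j, (j <= J0)%N -> gkj k 0%N i <= gkj k j i /\ gkj k j i <= Num.max (gkj k 0%N i) (rho * gam i).
  move=> J0 i nb; apply: (@inner_bound R rho (gam i) (fun j => gkj k j i)
     (fun j => LC_kj g c J eta x H d tau Lkj gkj k j i) J0 rho1' (g0p i)).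
  - by move=> j hj; exact: (upd j (nb j hj)).2 i.
  - move=> j hj; apply: LCfail => j' hj'; apply: nb; exact: ltn_trans hj' hj.
have Hex : exists j, accept f g c J eta x H d tau Lkj gkj k j.
  apply: (@inner_term R m rho (Lkj k) (gkj k) (LF_kj f g c eta x H d tau Lkj gkj k)
     (LC_kj g c J eta x H d tau Lkj gkj k) (accept f g c J eta x H d tau Lkj gkj k)
     (Num.max (Lkj k 0%N) (rho * L)) (fun i => Num.max (gkj k 0%N i) (rho * gam i))
     rho1 L0pos (fun i => (g0p i))).
  - by move=> j Hj; right.
  - exact: upd.
  - move=> Hno j; split.
      by have [] := bndL j (fun j' _ => Hno j') j (leqnn j).
    by move=> i; have [] := bndg j i (fun j' _ => Hno j') j (leqnn j).
split => //.
have Hex' : exists j, `[< accept f g c J eta x H d tau Lkj gkj k j >].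
  by case: Hex => j Hj; exists j; apply/asboolP.
case: (ex_minnP Hex') => j0 /asboolP Hacc Hmin.
have nb : forall j', (j' < j0)%N -> ~ accept f g c J eta x H d tau Lkj gkj k j'.
  move=> j' hj' Ha; have := Hmin j' (introT (asboolP _) Ha).
  by rewrite leqNgt hj'.
have [HLk Hgk _] := sel j0 Hacc nb.
split.
  rewrite HLk; have [_ hi] := bndL j0 nb j0 (leqnn j0).
  apply: (le_trans hi); rewrite ge_max; apply/andP; split; last by rewrite le_max lexx orbT.
  exact: le_trans L0le prevb.1.
move=> i; rewrite Hgk; have [_ hi] := bndg j0 i nb j0 (leqnn j0).
apply: (le_trans hi); rewrite ge_max; apply/andP; split; last by rewrite le_max lexx orbT.
have [_ g0le] := andP (g0 i).
exact: le_trans g0le (prevb.2 i).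
Qed.
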